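(* Let $G$ be a countable infinite group and $A$ a finite set. The Bernoulli shift $A^G$ is disjoint from every minimal, proximal $G$-flow. In particular, every minimal proximal $G$-flow has the separated covering property.
   Context: $A^G$ carries the product topology and the action $(g\cdot z)(h)=z(hg)$. A $G$-flow is proximal if for all $y_1,y_2$ there exist $z$ and a net $(g_i)$ in $G$ with $g_iy_1\to z$, $g_iy_2\to z$; minimal if every orbit is dense. Two $G$-flows are disjoint if the only closed invariant subset of their product projecting onto both factors is the whole product. For finite $D\subseteq G$, $S\subseteq G$ is $D$-separated if $Dg\cap Dh=\emptyset$ for distinct $g,h\in S$; a minimal flow $X$ has the separated covering property if for every finite $D\subseteq G$ and non-empty open $U\subseteq X$ there is a $D$-separated $S$ with $S^{-1}U=X$. *)

(* Defs.v *)
From Stdlib Require Import List.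
Set Implicit Arguments.

Definition is_group (G : Type) (mul : G -> G -> G) (e : G) (inv : G -> G) : Prop :=
  (forall a b c, mul a (mul b c) = mul (mul a b) c) /\
  (forall a, mul e a = a) /\ (forall a, mul a e = a) /\
  (forall a, mul (inv a) a = e) /\ (forall a, mul a (inv a) = e).

Definition countable_type (T : Type) : Prop :=
  exists f : T -> nat, forall x y, f x = f y -> x = y.
Definition infinite_type (T : Type) : Prop :=
  forall l : list T, exists x, ~ In x l.
Definition finite_type (T : Type) : Prop :=
  exists l : list T, forall x, In x l.

Definition is_topology (X : Type) (op : (X -> Prop) -> Prop) : Prop :=
  op (fun _ => True) /\
  (forall U V, op U -> op V -> op (fun x => U x /\ V x)) /\
  (forall (I : Type) (F : I -> X -> Prop),
      (forall i, op (F i)) -> op (fun x => exists i, F i x)).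

Definition is_closed (X : Type) (op : (X -> Prop) -> Prop) (C : X -> Prop) : Prop :=
  op (fun x => ~ C x).

Definition compact (X : Type) (op : (X -> Prop) -> Prop) : Prop :=
  forall (I : Type) (F : I -> X -> Prop),
    (forall i, op (F i)) -> (forall x, exists i, F i x) ->
    exists l : list I, forall x, exists i, In i l /\ F i x.

Definition hausdorff (X : Type) (op : (X -> Prop) -> Prop) : Prop :=
  forall x y, x <> y -> exists U V, op U /\ op V /\ U x /\ V y /\
    forall z, ~ (U z /\ V z).

Definition continuous (X Y : Type) (opX : (X -> Prop) -> Prop)
  (opY : (Y -> Prop) -> Prop) (f : X -> Y) : Prop :=
  forall V, opY V -> opX (fun x => V (f x)).

Definition prod_open (X Y : Type) (opX : (X -> Prop) -> Prop)
  (opY : (Y -> Prop) -> Prop) (W : X * Y -> Prop) : Prop :=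
  forall p, W p -> exists U V, opX U /\ opY V /\ U (fst p) /\ V (snd p) /\
    forall q, U (fst q) -> V (snd q) -> W q.

Definition directed (I : Type) (le : I -> I -> Prop) : Prop :=
  (exists i : I, True) /\ (forall i, le i i) /\
  (forall i j k, le i j -> le j k -> le i k) /\
  (forall i j, exists k, le i k /\ le j k).

Definition net_converges (X : Type) (op : (X -> Prop) -> Prop) (I : Type)
  (le : I -> I -> Prop) (f : I -> X) (z : X) : Prop :=
  forall U, op U -> U z -> exists i0, forall i, le i0 i -> U (f i).

Section Flows.
Variables (G : Type) (mul : G -> G -> G) (e : G) (inv : G -> G).

(* a G-flow: compact Hausdorff space with a continuous action of the discrete group G *)
Definition is_flow (X : Type) (op : (X -> Prop) -> Prop) (act : G -> X -> X) : Prop :=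
  is_topology op /\ compact op /\ hausdorff op /\
  (forall x, act e x = x) /\
  (forall g h x, act g (act h x) = act (mul g h) x) /\
  (forall g, continuous op op (act g)).

Definition minimal_flow (X : Type) (op : (X -> Prop) -> Prop) (act : G -> X -> X) : Prop :=
  forall x U, op U -> (exists y, U y) -> exists g, U (act g x).

Definition proximal_flow (X : Type) (op : (X -> Prop) -> Prop) (act : G -> X -> X) : Prop :=
  forall y1 y2 : X, exists (z : X) (I : Type) (le : I -> I -> Prop) (gs : I -> G),
    directed le /\
    net_converges op le (fun i => act (gs i) y1) z /\
    net_converges op le (fun i => act (gs i) y2) z.

Definition disjoint_flows (X Y : Type) (opX : (X -> Prop) -> Prop) (actX : G -> X -> X)
  (opY : (Y -> Prop) -> Prop) (actY : G -> Y -> Y) : Prop :=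
  forall C : X * Y -> Prop,
    is_closed (prod_open opX opY) C ->
    (forall g p, C p -> C (actX g (fst p), actY g (snd p))) ->
    (forall x, exists y, C (x, y)) ->
    (forall y, exists x, C (x, y)) ->
    forall p, C p.

Definition separated (D : list G) (S : G -> Prop) : Prop :=
  forall g h, S g -> S h -> g <> h ->
    forall d1 d2, In d1 D -> In d2 D -> mul d1 g <> mul d2 h.

(* S^{-1} U = X  means: every x has some s in S with s x in U *)
Definition separated_covering (X : Type) (op : (X -> Prop) -> Prop) (act : G -> X -> X) : Prop :=
  forall (D : list G) (U : X -> Prop), op U -> (exists x, U x) ->
    exists S : G -> Prop, separated D S /\
      forall x, exists s, S s /\ U (act s x).

(* product topology with A discrete: W open iff membership is witnessed by a
   finite set of coordinates (basic cylinder sets) *)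
Definition shift_open (A : Type) (W : (G -> A) -> Prop) : Prop :=
  forall z, W z -> exists F : list G,
    forall z', (forall h, In h F -> z' h = z h) -> W z'.

Definition shift_act (A : Type) (g : G) (z : G -> A) : G -> A :=
  fun h => z (mul h g).

End Flows.

(* Main.v *)
Require Import Defs.
From Stdlib Require Import List.
From Stdlib Require Import Lia Arith Classical ClassicalEpsilon FunctionalExtensionality PropExtensionality.
Set Implicit Arguments.

Definition pick (l : list nat) : nat :=
  hd 0 (filter (fun c => negb (existsb (Nat.eqb c) l)) (seq 0 (S (length l)))).

Lemma pick_spec l : ~ In (pick l) l /\ pick l <= length l.
Proof.
  unfold pick.
  remember (filter (fun c => negb (existsb (Nat.eqb c) l)) (seq 0 (S (length l)))) as fl eqn:Efl.
  assert (Hne : fl <> nil).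
  { intro H. assert (Hinc: incl (seq 0 (S (length l))) l).
    { intros c Hc. destruct (existsb (Nat.eqb c) l) eqn:E.
      - apply existsb_exists in E as [c' [Hc' Eq]]. apply Nat.eqb_eq in Eq; subst; auto.
      - exfalso. assert (In c fl) as H0.
        { rewrite Efl. apply filter_In. rewrite E. auto. }
        rewrite H in H0; inversion H0. }
    pose proof (NoDup_incl_length (seq_NoDup _ _) Hinc) as H0.
    rewrite length_seq in H0. lia. }
  destruct fl as [|n fl'] eqn:E2; [congruence|]. simpl.
  assert (In n (filter (fun c => negb (existsb (Nat.eqb c) l)) (seq 0 (S (length l))))) as H
    by (rewrite <- Efl; left; auto).
  apply filter_In in H as [H1 H2]. apply in_seq in H1. split; [|lia].
  intro Hin. assert (existsb (Nat.eqb n) l = true) as H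
    by (apply existsb_exists; exists n; split; auto; apply Nat.eqb_refl).
  rewrite H in H2. discriminate.
Qed.

Fixpoint colF (G : Type) (nbr : G -> list G) (f : G -> nat) (n : nat) (g : G) {struct n} : nat :=
  match n with
  | 0 => 0
  | S n' => pick (map (@colF G nbr f n') (filter (fun g' => Nat.ltb (f g') (f g)) (nbr g)))
  end.
Arguments colF {G}.

Lemma colF_stable (G : Type) (nbr : G -> list G) (f : G -> nat) :
  forall n g, f g < n -> forall m, n <= m -> colF nbr f m g = colF nbr f n g.
Proof.
  induction n; intros g Hg m Hm. lia.
  destruct m as [|m]; [lia|]. simpl. f_equal. apply map_ext_in.
  intros g' Hin. apply filter_In in Hin as [_ Hlt]. apply Nat.ltb_lt in Hlt.
  apply IHn; lia.
Qed.

Lemma coloring (G : Type) (nbr : G -> list G) (f : G -> nat) (K : nat)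
  (HK : forall g, length (nbr g) <= K) :
  exists col : G -> nat, (forall g, col g <= K) /\
    forall g g', In g' (nbr g) -> f g' < f g -> col g <> col g'.
Proof.
  exists (fun g => colF nbr f (S (f g)) g). split.
  - intro g. simpl.
    pose proof (pick_spec (map (colF nbr f (f g)) (filter (fun g' => Nat.ltb (f g') (f g)) (nbr g)))) as [_ H].
    rewrite length_map in H. pose proof (filter_length_le (fun g' => Nat.ltb (f g') (f g)) (nbr g)).
    specialize (HK g). lia.
  - intros g g' Hin Hlt Heq. simpl in Heq.
    apply (proj1 (pick_spec (map (colF nbr f (f g)) (filter (fun g' => Nat.ltb (f g') (f g)) (nbr g))))).
    rewrite Heq. apply in_map_iff. exists g'. split.
    + change (colF nbr f (f g) g' = colF nbr f (S (f g')) g'). apply colF_stable; lia.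
    + apply filter_In. split; auto. apply Nat.ltb_lt; auto.
Qed.

Lemma sep_coloring (G : Type) (mul : G -> G -> G) (e : G) (inv : G -> G)
  (HG : is_group mul e inv) (Hc : countable_type G) (T : list G) :
  exists (col : G -> nat) (K : nat), (forall g, col g <= K) /\
    (forall g g' t, In t T -> col g = col g' -> g' = mul t g -> g = g').
Proof.
  destruct HG as [Hassoc [Hel [Her [Hil Hir]]]].
  destruct Hc as [f Hf].
  set (nbr := fun g => map (fun t => mul t g) T ++ map (fun t => mul (inv t) g) T).
  destruct (@coloring G nbr f (length T + length T)) as [col [Hle Hneq]].
  { intro g. unfold nbr. rewrite length_app, !length_map. lia. }
  exists col, (length T + length T). split; auto.
  intros g g' t Ht Hcol Hg'. apply NNPP; intro Hne.
  assert (f g <> f g') by (intro E; apply Hne; apply Hf; auto).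
  destruct (Nat.lt_gt_cases (f g) (f g')) as [[Hlt|Hlt] _]; [lia| |].
  - apply (Hneq g' g); auto. unfold nbr. apply in_or_app. right.
    apply in_map_iff. exists t. split; auto.
    rewrite Hg', Hassoc, Hil, Hel. reflexivity.
  - apply (Hneq g g'); auto. unfold nbr. apply in_or_app. left.
    apply in_map_iff. exists t. split; auto.
Qed.

Lemma op_inter_list (X I : Type) (op : (X -> Prop) -> Prop) (Htop : is_topology op)
  (l : list I) (P : I -> X -> Prop) :
  (forall i, op (P i)) -> op (fun y => forall i, In i l -> P i y).
Proof.
  intro HP. destruct Htop as [HT [HI _]]. induction l as [|a l IH].
  - replace (fun y => forall i, In i nil -> P i y) with (fun _ : X => True); auto.
    apply functional_extensionality; intro y. apply propositional_extensionality.
    split; auto. intros _ i [].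
  - replace (fun y => forall i, In i (a :: l) -> P i y)
      with (fun y => P a y /\ (forall i, In i l -> P i y)).
    + apply HI; auto.
    + apply functional_extensionality; intro y. apply propositional_extensionality.
      split.
      * intros [H1 H2] i [<-|Hi]; auto.
      * intro H. split; [apply H; left; auto|]. intros i Hi; apply H; right; auto.
Qed.

Lemma cluster (G X : Type) (op : (X -> Prop) -> Prop) (act : G -> X -> X)
  (Htop : is_topology op) (Hcomp : compact op) (x0 : X) (L : list X) (w : X) :
  (forall O, op O -> O w -> exists g, forall y, In y L -> O (act g y)) ->
  exists u, forall O O', op O -> O w -> op O' -> O' u ->
    exists g, (forall y, In y L -> O (act g y)) /\ O' (act g x0).
Proof.
  intros HQ. apply NNPP; intro Hn.
  assert (Hall: forall u, exists p : (X -> Prop) * (X -> Prop),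
    op (fst p) /\ fst p w /\ op (snd p) /\ snd p u /\
    forall g, ~ ((forall y, In y L -> fst p (act g y)) /\ snd p (act g x0))).
  { intro u. apply NNPP; intro Hu. apply Hn. exists u. intros O O' hO hw hO' hu.
    apply NNPP; intro Hg. apply Hu. exists (O, O'). simpl. repeat split; auto.
    intros g Hg2. apply Hg. exists g; exact Hg2. }
  set (I := {p : (X -> Prop) * (X -> Prop) | op (fst p) /\ fst p w /\ op (snd p) /\
    forall g, ~ ((forall y, In y L -> fst p (act g y)) /\ snd p (act g x0))}).
  destruct (Hcomp I (fun i => snd (proj1_sig i))) as [l Hl].
  - intros [p Hp]; simpl; tauto.
  - intro u. destruct (Hall u) as [p [h1 [h2 [h3 [h4 h5]]]]].
    exists (exist _ p (conj h1 (conj h2 (conj h3 h5)))). simpl. exact h4.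
  - set (O := fun y => forall i, In i l -> fst (proj1_sig i) y).
    assert (hO : op O).
    { apply (@op_inter_list X I op Htop l (fun i => fst (proj1_sig i))). intros [p Hp]; simpl; tauto. }
    assert (hOw : O w) by (intros [p Hp] _; simpl; tauto).
    destruct (HQ O hO hOw) as [g Hg].
    destruct (Hl (act g x0)) as [[p Hp] [Hin Hsnd]]. simpl in Hsnd.
    pose proof (proj2 (proj2 (proj2 Hp))) as Hno.
    apply (Hno g). split; auto.
    intros y Hy. exact (Hg y Hy _ Hin).
Qed.

Definition Qprop (G X : Type) (op : (X -> Prop) -> Prop) (act : G -> X -> X) (L : list X) :=
  exists v, forall O, op O -> O v -> exists g, forall y, In y L -> O (act g y).

Lemma Qall (G : Type) (mul : G -> G -> G) (e : G) (X : Type) (op : (X -> Prop) -> Prop)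
  (act : G -> X -> X) (Hf : is_flow mul e op act) (Hprox : proximal_flow op act) :
  forall L x, Qprop op act (x :: L).
Proof.
  destruct Hf as [Htop [Hcomp [_ [Hae [Hcomp2 Hcont]]]]].
  induction L as [|y L IH]; intro x.
  - exists x. intros O hO hx. exists e. intros y [<-|[]]. rewrite Hae; auto.
  - destruct (IH y) as [w Hw].
    destruct (@cluster G X op act Htop Hcomp x (y :: L) w Hw) as [u Hu].
    destruct (Hprox w u) as [z [I [le [gs [Hdir [c1 c2]]]]]].
    exists z. intros O hO hz.
    destruct (c1 O hO hz) as [i1 Hi1]. destruct (c2 O hO hz) as [i2 Hi2].
    destruct Hdir as [_ [_ [_ Hup]]]. destruct (Hup i1 i2) as [k [Hk1 Hk2]].
    set (h := gs k).
    set (P := fun q => O (act h q)).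
    assert (hP : op P) by (apply Hcont; auto).
    destruct (Hu P P hP (Hi1 k Hk1) hP (Hi2 k Hk2)) as [g [Hg1 Hg2]].
    exists (mul h g). intros q Hq. rewrite <- Hcomp2.
    destruct Hq as [<-|Hq]; [exact Hg2|exact (Hg1 q Hq)].
Qed.

Lemma move (G : Type) (mul : G -> G -> G) (e : G) (X : Type) (op : (X -> Prop) -> Prop)
  (act : G -> X -> X) (Hf : is_flow mul e op act) (Hmin : minimal_flow op act)
  (Hprox : proximal_flow op act) :
  forall L V, op V -> (exists y, V y) -> exists g, forall y, In y L -> V (act g y).
Proof.
  intros [|x L] V hV hne.
  - exists e. intros y [].
  - destruct (Qall Hf Hprox L x) as [v Hv].
    pose proof Hf as [Htop [Hcomp [_ [Hae [Hcomp2 Hcont]]]]].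
    destruct (Hmin v V hV hne) as [h Hh].
    set (P := fun q => V (act h q)).
    assert (hP : op P) by (apply Hcont; auto).
    destruct (Hv P hP Hh) as [g Hg].
    exists (mul h g). intros q Hq. rewrite <- Hcomp2. exact (Hg q Hq).
Qed.

Theorem corollary4p5 (G : Type) (mul : G -> G -> G) (e : G) (inv : G -> G)
  (A : Type)
  (HG : is_group mul e inv) (Hcount : countable_type G) (Hinf : infinite_type G)
  (HA : finite_type A) :
  forall (X : Type) (op : (X -> Prop) -> Prop) (act : G -> X -> X),
    is_flow mul e op act ->
    minimal_flow op act ->
    proximal_flow op act ->
    disjoint_flows (@shift_open G A) (shift_act mul (A:=A)) op act /\
    separated_covering mul op act.
Proof.
  intros X op act Hf Hmin Hprox.
  pose proof HG as [Hassoc [Hel [Her [Hil Hir]]]].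
  split.
  - intros C Hcl Hinv Hx Hy [z x]. apply NNPP; intro Hn.
    destruct (Hcl (z, x) Hn) as [U [V [hU [hV [Uz [Vx HUV]]]]]].
    simpl in Uz, Vx.
    destruct (hU z Uz) as [F HF].
    set (T := flat_map (fun h' => map (fun h => mul (inv h') h) F) F).
    destruct (sep_coloring HG Hcount T) as [col [K [Hle Hsep]]].
    assert (Hsep2 : forall g g' h h', In h F -> In h' F -> col g = col g' ->
               mul h g = mul h' g' -> h = h').
    { intros g g' h h' Hh Hh' Hc Heq.
      assert (g = g') as <-.
      { apply (Hsep g g' (mul (inv h') h)); auto.
        - unfold T. apply in_flat_map. exists h'. split; auto.
          apply in_map_iff. exists h; auto.
        - rewrite <- Hassoc, Heq, Hassoc, Hil, Hel. reflexivity. }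
      rewrite <- (Her h), <- (Her h'), <- (Hir g), !Hassoc, Heq. reflexivity. }
    set (w := fun j (k : G) => z (epsilon (inhabits e)
               (fun h => In h F /\ exists g, col g = j /\ k = mul h g))).
    assert (Hw : forall g h, In h F -> shift_act mul g (w (col g)) h = z h).
    { intros g h Hh. unfold shift_act, w.
      pose proof (epsilon_spec (inhabits e)
        (fun h0 => In h0 F /\ exists g0, col g0 = col g /\ mul h g = mul h0 g0)) as Hs.
      destruct Hs as [Hh' [g' [Hcg Heq]]].
      { exists h. split; auto. exists g. auto. }
      f_equal. symmetry. apply (Hsep2 g g'); auto. }
    set (xj := fun j => epsilon (inhabits x) (fun y => C (w j, y))).
    destruct (move Hf Hmin Hprox (map xj (seq 0 (S K))) V hV (ex_intro _ x Vx)) as [g Hg].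
    assert (HV : V (act g (xj (col g)))).
    { apply Hg. apply in_map. apply in_seq. specialize (Hle g). lia. }
    assert (HC : C (w (col g), xj (col g))).
    { unfold xj. apply epsilon_spec. apply Hx. }
    apply (Hinv g) in HC. simpl in HC.
    apply (HUV (shift_act mul g (w (col g)), act g (xj (col g)))); [| exact HV | exact HC]. simpl.
    apply HF. intros h Hh. apply (Hw g h Hh).
  - intros D U hU hne.
    set (T := flat_map (fun d2 => map (fun d1 => mul (inv d2) d1) D) D).
    destruct (sep_coloring HG Hcount T) as [col [K [Hle Hsep]]].
    assert (Hex : exists j, forall x, exists s, col s = j /\ U (act s x)).
    { apply NNPP; intro Hn.
      destruct hne as [y0 Hy0].
      set (xj := fun j => epsilon (inhabits y0)
                   (fun x => ~ exists s, col s = j /\ U (act s x))).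
      destruct (move Hf Hmin Hprox (map xj (seq 0 (S K))) U hU (ex_intro _ y0 Hy0)) as [g Hg].
      assert (HV : U (act g (xj (col g)))).
      { apply Hg. apply in_map. apply in_seq. specialize (Hle g). lia. }
      assert (Hno : ~ exists s, col s = col g /\ U (act s (xj (col g)))).
      { unfold xj. apply (epsilon_spec (inhabits y0)
          (fun x => ~ exists s, col s = col g /\ U (act s x))).
        apply NNPP; intro H2. apply Hn. exists (col g). intro x.
        apply NNPP; intro H3. apply H2. exists x. exact H3. }
      apply Hno. exists g. auto. }
    destruct Hex as [j Hj].
    exists (fun s => col s = j). split; auto.
    intros g h Sg Sh Hne d1 d2 Hd1 Hd2 Heq.
    apply Hne. apply (Hsep g h (mul (inv d2) d1)).
    + unfold T. apply in_flat_map. exists d2. split; auto. apply in_map_iff. exists d1; auto.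
    + congruence.
    + rewrite <- Hassoc, Heq, Hassoc, Hil, Hel. reflexivity.
Qed.
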